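(* Let $i,h,g,f$ be positive integers with $f<g$, $f\le h$, and suppose $g-f<ih$. Let $D$ be the $(i+1)h\times(h+g)$ array whose empty cells are exactly those in rows $[ih+1,(i+1)h]$ and columns $[h+g-f+1,h+g]$, and let $D'$ be the $ih\times(h+g)$ array whose empty cells are exactly those in rows $[ih-(g-f)+1,ih]$ and columns $[1,h]$. Then the bishop is a solution to $T(D)$ if and only if it is a solution to $T(D')$.
   Context: Arrays are partially filled and toroidal; $F(B)$ is the set of filled cells. $s_R(i,j)=(i,j+t)$, $s_C(i,j)=(i+t,j)$ with $t\ge1$ minimal such that the cell is filled. The bishop's move is $s_C\circ s_R$. A move function is a solution to $T(B)$ if it is a permutation of $F(B)$ forming a single cycle of length $|F(B)|$. *)

(* Defs.v *)
From mathcomp Require Import all_boot.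
Set Implicit Arguments. Unset Strict Implicit. Unset Printing Implicit Defensive.

(* Cells of an m x n toroidal array: pairs (row, column), 0-based.
   A partially filled array is given by its set F(B) of filled cells,
   a predicate on cells. *)

Definition addmod n (j : 'I_n) (t : nat) : 'I_n :=
  Ordinal (ltn_pmod (j + t) (leq_ltn_trans (leq0n j) (ltn_ord j))).

(* s_R(i,j) = (i, j+t) with t >= 1 minimal such that the cell is filled.
   t ranges over 1..n (t = k.+1 for k in 0..n-1); for a filled cell t = n
   always works, so the search succeeds on F(B). *)
Definition sR m n (F : pred ('I_m * 'I_n)) (x : 'I_m * 'I_n) : 'I_m * 'I_n :=
  let k := find (fun k => F (x.1, addmod x.2 k.+1)) (iota 0 n) in
  (x.1, addmod x.2 k.+1).

Definition sC m n (F : pred ('I_m * 'I_n)) (x : 'I_m * 'I_n) : 'I_m * 'I_n :=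
  let k := find (fun k => F (addmod x.1 k.+1, x.2)) (iota 0 m) in
  (addmod x.1 k.+1, x.2).

Definition bishop m n (F : pred ('I_m * 'I_n)) (x : 'I_m * 'I_n) : 'I_m * 'I_n :=
  sC F (sR F x).

(* A move function mv is a solution to T(B) if it is a permutation of F(B)
   forming a single cycle (of length |F(B)|): it maps F(B) into F(B),
   is injective on F(B), and any filled cell reaches any other by iteration. *)
Definition is_solution (T : finType) (F : pred T) (mv : T -> T) : Prop :=
  [/\ {in F, forall x, mv x \in F},
      {in F &, injective mv} &
      {in F &, forall x y, exists k, iter k mv x = y}].

(* D : (i+1)h x (h+g), empty cells are rows [ih+1,(i+1)h], cols [h+g-f+1,h+g]
   (1-based), i.e. 0-based rows >= ih and cols >= h+g-f. *)
Definition D_filled (i h g f : nat) : pred ('I_((i + 1) * h) * 'I_(h + g)) :=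
  fun x => ~~ ((i * h <= x.1) && (h + g - f <= x.2)).

(* D' : ih x (h+g), empty cells are rows [ih-(g-f)+1, ih], cols [1,h]
   (1-based), i.e. 0-based rows >= ih-(g-f) and cols < h. *)
Definition D'_filled (i h g f : nat) : pred ('I_(i * h) * 'I_(h + g)) :=
  fun x => ~~ ((i * h - (g - f) <= x.1) && (x.2 < h)).

Arguments D_filled : clear implicits.
Arguments D'_filled : clear implicits.

(* Main.v *)
Require Import Defs.
From mathcomp Require Import all_boot zify.
Set Implicit Arguments. Unset Strict Implicit. Unset Printing Implicit Defensive.


Definition nxt n (P : pred 'I_n) (a : 'I_n) : 'I_n :=
  addmod a (find (fun k => P (addmod a k.+1)) (iota 0 n)).+1.

Lemma sR_E m n (F : pred ('I_m * 'I_n)) x :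
  sR F x = (x.1, nxt (fun c => F (x.1, c)) x.2).
Proof. by []. Qed.

Lemma sC_E m n (F : pred ('I_m * 'I_n)) x :
  sC F x = (nxt (fun r => F (r, x.2)) x.1, x.2).
Proof. by []. Qed.

Lemma find_iota0 n (p : pred nat) k : k < n -> p k -> (forall j, j < k -> ~~ p j) ->
  find p (iota 0 n) = k.
Proof.
move=> kn pk hj.
have hs : has p (iota 0 n) by apply/hasP; exists k => //; rewrite mem_iota.
have := has_find p (iota 0 n); rewrite hs size_iota => /esym fl.
case: (ltngtP (find p (iota 0 n)) k) => // H.
- have := nth_find 0 hs; rewrite nth_iota // add0n => pj.
  by move: (hj _ H); rewrite pj.
- have := before_find 0 H; rewrite nth_iota // add0n pk //.
Qed.

Lemma nxt_in n (P : pred 'I_n) a : P a -> P (nxt P a).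
Proof.
move=> Pa; rewrite /nxt.
have n0 : 0 < n := leq_ltn_trans (leq0n a) (ltn_ord a).
have hs : has (fun k => P (addmod a k.+1)) (iota 0 n).
  apply/hasP; exists n.-1; first by rewrite mem_iota; lia.
  have -> : addmod a n.-1.+1 = a.
    by apply/val_inj => /=; rewrite prednK // modnDr modn_small.
  by [].
have := nth_find 0 hs; rewrite nth_iota ?add0n //.
by have := has_find (fun k => P (addmod a k.+1)) (iota 0 n); rewrite hs size_iota => <-.
Qed.

Lemma nxt_inj n (P : pred 'I_n) a b : P a -> P b -> nxt P a = nxt P b -> a = b.
Proof.
have key : forall a b : 'I_n, P a -> P b ->
    find (fun k => P (addmod a k.+1)) (iota 0 n) <= find (fun k => P (addmod b k.+1)) (iota 0 n) ->
    nxt P a = nxt P b -> a = b.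
  move=> {}a {}b Pa Pb; rewrite /nxt.
  set ka := find _ _; set kb := find _ _ => hk /(congr1 val) /= /eqP e.
  case: (ltngtP ka kb) hk => // [lt|eqk] _; last first.
    rewrite eqk eqn_modDr !modn_small // in e.
    by apply/val_inj/eqP.
  exfalso.
  have : (kb - ka).-1 < kb by lia.
  move/(before_find 0); rewrite nth_iota ?add0n; last first.
    have := find_size (fun k => P (addmod b k.+1)) (iota 0 n); rewrite size_iota -/kb; lia.
  have -> : addmod b (kb - ka).-1.+1 = a; last by rewrite Pa.
  apply/val_inj => /=.
  have -> : (kb - ka).-1.+1 = kb - ka by lia.
  have e' : b + kb.+1 = (b + (kb - ka)) + ka.+1 by lia.
  rewrite e' eqn_modDr in e.
  by rewrite -(eqP e) modn_small.
move=> Pa Pb e.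
case: (leqP (find (fun k => P (addmod a k.+1)) (iota 0 n)) (find (fun k => P (addmod b k.+1)) (iota 0 n))) => H.
  exact: key.
by apply/esym/key => //; apply: ltnW.
Qed.

Lemma nxt_int n (P : pred 'I_n) lo hi (a : 'I_n) :
  lo < hi <= n -> (forall x : 'I_n, P x = (lo <= x < hi)) -> lo <= a < hi ->
  val (nxt P a) = if a.+1 < hi then a.+1 else lo.
Proof.
move=> hlh hP ha; rewrite /nxt.
case: ifP => h1.
  rewrite (@find_iota0 n _ 0) /=; first by rewrite addn1 modn_small //; lia.
  - lia.
  - by rewrite hP /= addn1 modn_small; lia.
  - by [].
rewrite (@find_iota0 n _ (n - hi + lo)) /=.
- have -> : a + (n - hi + lo).+1 = n + lo by lia.
  by rewrite modnDl modn_small //; lia.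
- lia.
- rewrite hP /=.
  have -> : a + (n - hi + lo).+1 = n + lo by lia.
  by rewrite modnDl modn_small //; lia.
- move=> j hj; rewrite hP /=.
  have -> : a + j.+1 = hi + j by lia.
  case: (ltnP (hi + j) n) => hn.
    rewrite modn_small //; lia.
  have -> : hi + j = n + (hi + j - n) by lia.
  rewrite modnDl modn_small //; lia.
Qed.

Lemma sR_in m n (F : pred ('I_m * 'I_n)) x : F x -> F (sR F x).
Proof. by case: x => r c Fx; rewrite sR_E; apply: (nxt_in (P := fun c => F (r, c))). Qed.

Lemma sC_in m n (F : pred ('I_m * 'I_n)) x : F x -> F (sC F x).
Proof. by case: x => r c Fx; rewrite sC_E; apply: (nxt_in (P := fun r => F (r, c))). Qed.

Lemma sR_inj m n (F : pred ('I_m * 'I_n)) x y : F x -> F y -> sR F x = sR F y -> x = y.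
Proof.
case: x => r c; case: y => r' c' Fx Fy; rewrite !sR_E => E.
have /= er := congr1 fst E; have /= e := congr1 snd E.
move: Fy e; rewrite -er => Fy e.
by rewrite (nxt_inj (P := fun c => F (r, c)) Fx Fy e).
Qed.

Lemma sC_inj m n (F : pred ('I_m * 'I_n)) x y : F x -> F y -> sC F x = sC F y -> x = y.
Proof.
case: x => r c; case: y => r' c' Fx Fy; rewrite !sC_E => E.
have /= ec := congr1 snd E; have /= e := congr1 fst E.
move: Fy e; rewrite -ec => Fy e.
by rewrite (nxt_inj (P := fun r => F (r, c)) Fx Fy e).
Qed.

Lemma bishop_in m n (F : pred ('I_m * 'I_n)) x : F x -> F (bishop F x).
Proof. by move=> Fx; apply/sC_in/sR_in. Qed.

Lemma bishop_inj m n (F : pred ('I_m * 'I_n)) x y : F x -> F y -> bishop F x = bishop F y -> x = y.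
Proof.
move=> Fx Fy e; exact: (sR_inj Fx Fy (sC_inj (sR_in Fx) (sR_in Fy) e)).
Qed.

Lemma sR_int m n (F : pred ('I_m * 'I_n)) (x : 'I_m * 'I_n) lo hi :
  lo < hi <= n -> (forall c : 'I_n, F (x.1, c) = (lo <= c < hi)) -> lo <= x.2 < hi ->
  (sR F x).1 = x.1 /\ val (sR F x).2 = if x.2.+1 < hi then x.2.+1 else lo.
Proof. by move=> h1 h2 h3; split => //; exact: (nxt_int h1 h2 h3). Qed.

Lemma sC_int m n (F : pred ('I_m * 'I_n)) (x : 'I_m * 'I_n) lo hi :
  lo < hi <= m -> (forall r : 'I_m, F (r, x.2) = (lo <= r < hi)) -> lo <= x.1 < hi ->
  (sC F x).2 = x.2 /\ val (sC F x).1 = if x.1.+1 < hi then x.1.+1 else lo.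
Proof. by move=> h1 h2 h3; split => //; exact: (nxt_int h1 h2 h3). Qed.

Section Abs.
Variables (T : finType) (F : pred T) (b : T -> T) (p : T -> nat * nat)
  (s : nat * nat -> nat * nat) (n : nat) (R : nat -> nat).
Hypothesis hF : forall x, F x -> F (b x).
Hypothesis hinj : forall x y, F x -> F y -> b x = b y -> x = y.
Hypothesis hp : forall x, F x -> p (b x) = s (p x).
Hypothesis hY : forall x, (p x).1 = 0 -> F x.
Hypothesis hpinj : injective p.
Hypothesis hsurj : forall c, c < n -> exists y, p y = (0, c).
Hypothesis hcol : forall x, (p x).2 < n.
Hypothesis hreach : forall z, exists k, (iter k s z).1 = 0.
Hypothesis hret : forall c, c < n -> exists L, [/\ 0 < L, iter L s (0, c) = (0, R c)
   & forall j, 0 < j < L -> (iter j s (0, c)).1 != 0].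

Lemma itp k x : F x -> p (iter k b x) = iter k s (p x) /\ F (iter k b x).
Proof.
move=> Fx; elim: k => [|k [IH1 IH2]] //=.
by rewrite hp // IH1; split => //; apply: hF.
Qed.

Lemma Rc c : c < n -> R c < n.
Proof.
move=> hc; have [L [_ e _]] := hret hc; have [y py] := hsurj hc.
have Fy : F y by apply: hY; rewrite py.
have [e2 _] := itp L Fy; rewrite py e in e2.
by have := hcol (iter L b y); rewrite e2.
Qed.

Lemma lemA j c : c < n -> exists k, iter k s (0, c) = (0, iter j R c).
Proof.
elim: j c => [|j IH] c hc; first by exists 0.
have [k hk] := IH _ (Rc hc); have [L [_ e _]] := hret hc.
by exists (k + L); rewrite iterD e hk iterSr.
Qed.

Lemma lemB k c c' : c < n -> iter k s (0, c) = (0, c') -> exists j, iter j R c = c'.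
Proof.
elim/ltn_ind: k c => k IH c hc e.
case: k IH e => [|k] IH e.
  by exists 0; case: e.
have [L [L0 eL hL]] := hret hc.
case: (ltnP k.+1 L) => hk.
  by move: (hL k.+1); rewrite e /= hk => /(_ isT).
have e2 : iter (k.+1 - L) s (0, R c) = (0, c').
  by rewrite -eL -iterD subnK.
have [j hj] := IH (k.+1 - L) ltac:(lia) _ (Rc hc) e2.
by exists j.+1; rewrite iterSr.
Qed.

Lemma period x k : F x -> exists k', iter k' b (iter k b x) = x.
Proof.
move=> Fx.
have fin : {homo b : x / x \in [pred y | F y]} by move=> y; rewrite !inE; apply: hF.
have inj : {in [pred y | F y] &, injective b} by move=> y z; rewrite !inE; apply: hinj.
have c1 : fconnect b x (iter k b x) by apply: fconnect_iter.
have Fk : F (iter k b x) by have [] := itp k Fx.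
rewrite (fconnect_sym_in fin inj) ?inE // in c1.
by exists (findex b (iter k b x) x); apply: iter_findex.
Qed.

Lemma abs_main : is_solution F b <-> forall c c', c < n -> c' < n -> exists j, iter j R c = c'.
Proof.
split.
- case=> _ _ tr c c' hc hc'.
  have [y py] := hsurj hc; have [z pz] := hsurj hc'.
  have Fy : F y by apply: hY; rewrite py.
  have Fz : F z by apply: hY; rewrite pz.
  have [k ek] := tr y z Fy Fz.
  apply: (@lemB k) => //.
  by have [e _] := itp k Fy; rewrite ek pz py in e; rewrite -e.
- move=> Rt; split.
  + by move=> x Fx; apply: hF.
  + by move=> x y Fx Fy; apply: hinj.
  move=> x z Fx Fz.
  have [k1 e1] := hreach (p x); have [k2 e2] := hreach (p z).
  have [p1 F1] := itp k1 Fx; have [p2 F2] := itp k2 Fz.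
  set y := iter k1 b x in p1 F1; set w := iter k2 b z in p2 F2.
  have py : p y = (0, (p y).2) by rewrite p1 -e1; case: (iter k1 s (p x)).
  have pw : p w = (0, (p w).2) by rewrite p2 -e2; case: (iter k2 s (p z)).
  have [j ej] := Rt _ _ (hcol y) (hcol w).
  have [k ek] := lemA j (hcol y).
  have [k3 e3] := period k2 Fz.
  have ew : iter k b y = w.
    by apply: hpinj; have [-> _] := itp k F1; rewrite py ek ej -pw.
  by exists (k3 + (k + k1)); rewrite !iterD -/y ew.
Qed.
End Abs.

Definition sD (i h g f : nat) (x : nat * nat) : nat * nat :=
  let c' := if x.1 < i * h then (if x.2.+1 < h + g then x.2.+1 else 0)
            else (if x.2.+1 < h + g - f then x.2.+1 else 0) in
  (if c' < h + g - f then (if x.1.+1 < (i + 1) * h then x.1.+1 else 0)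
   else (if x.1.+1 < i * h then x.1.+1 else 0), c').

Definition pp m n (x : 'I_m * 'I_n) : nat * nat := (val x.1, val x.2).

Lemma hpD i h g f (x : 'I_((i + 1) * h) * 'I_(h + g)) :
  0 < i -> 0 < h -> 0 < g -> 0 < f -> f < g -> f <= h ->
  D_filled i h g f x -> pp (bishop (D_filled i h g f) x) = sD i h g f (pp x).
Proof.
move=> i0 h0 g0 f0 fg fh Fx.
have ltm : i * h < (i + 1) * h by rewrite mulnDl mul1n; lia.
have [e1 e2] : (sR (D_filled i h g f) x).1 = x.1 /\
   val (sR (D_filled i h g f) x).2 = if x.1 < i * h then (if x.2.+1 < h + g then x.2.+1 else 0)
            else (if x.2.+1 < h + g - f then x.2.+1 else 0).
  case: (ltnP x.1 (i * h)) => hr.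
    apply: (@sR_int _ _ _ _ 0 (h + g)); first lia.
      by move=> c0; rewrite /D_filled /=; case: c0 => c0 /= hc0; apply/idP/idP; lia.
    by case: x.2 => /=; lia.
  apply: (@sR_int _ _ _ _ 0 (h + g - f)); first lia.
    by move=> c0; rewrite /D_filled /=; case: c0 => c0 /= hc0; apply/idP/idP; lia.
  move: Fx; rewrite /D_filled; case: x.2 => /=; lia.
rewrite /bishop; set y := sR _ x in e1 e2 *.
have Fy : D_filled i h g f y by apply: sR_in.
clearbody y.
case: (ltnP y.2 (h + g - f)) => hc.
  have [e3 e4] := @sC_int _ _ (D_filled i h g f) y 0 ((i + 1) * h) ltac:(lia)
    ltac:(by move=> c0; rewrite /D_filled /=; case: c0 => c0 /= hc0; apply/idP/idP; lia)
    ltac:(by case: y.1 => /=; lia).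
  by rewrite /pp e3 e4 /sD /= -e2 hc e1.
have [e3 e4] := @sC_int _ _ (D_filled i h g f) y 0 (i * h) ltac:(lia)
    ltac:(by move=> c0; rewrite /D_filled /=; case: c0 => c0 /= hc0; apply/idP/idP; lia)
    ltac:(by move: Fy; rewrite /D_filled; case: y.1 => /=; lia).
rewrite /pp e3 e4 /sD /= -e2 e1 (ltnNge y.2 (h + g - f)) hc /=; done.
Qed.

Lemma reach_gen (s : nat * nat -> nat * nat) m :
  (forall z, (s z).1 = 0 \/ ((s z).1 = z.1.+1 /\ z.1.+1 < m)) ->
  forall z, exists k, (iter k s z).1 = 0.
Proof.
move=> hs.
suff H : forall d z, m - z.1 <= d -> exists k, (iter k s z).1 = 0.
  by move=> z; apply: (H (m - z.1)).
elim=> [|d IH] z hz.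
  by exists 1; case: (hs z) => [//|[_ ?]]; lia.
case: (hs z) => [e|[e lt]]; first by exists 1.
have [k hk] := IH (s z) ltac:(lia).
by exists k.+1; rewrite iterSr.
Qed.

Lemma modS_if n x : 0 < n -> (if (x %% n).+1 < n then (x %% n).+1 else 0) = x.+1 %% n.
Proof.
move=> n0; rewrite -[x.+1]addn1 -modnDml addn1.
case: ifP => h; first by rewrite (modn_small h).
have -> : (x %% n).+1 = n by have := ltn_pmod x n0; lia.
by rewrite modnn.
Qed.

Definition RD (i h g f c : nat) :=
  let c1 := (c + i * h) %% (h + g) in
  if c1 < h + g - f then (c1 + h) %% (h + g - f) else c1.

Section DS.
Variables i h g f : nat.
Hypotheses (i0 : 0 < i) (h0 : 0 < h) (g0 : 0 < g) (f0 : 0 < f) (fg : f < g) (fh : f <= h).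
Local Notation s := (sD i h g f).

Lemma em : (i + 1) * h = i * h + h.
Proof. by rewrite mulnDl mul1n. Qed.

Lemma reachD z : exists k, (iter k s z).1 = 0.
Proof.
apply: (@reach_gen _ ((i + 1) * h)) => {}z; rewrite /sD /= em.
by repeat case: ifP => ?; lia.
Qed.

Lemma ph1D c j : c < h + g -> j < i * h -> iter j s (0, c) = (j, (c + j) %% (h + g)).
Proof.
move=> hc; elim: j => [|j IH] hj; first by rewrite addn0 modn_small.
rewrite iterS IH; last lia.
rewrite /sD /=.
have -> : (j < i * h) = true by lia.
rewrite modS_if; last lia.
rewrite -addnS.
have -> : j.+1 < (i + 1) * h by rewrite em; lia.
by rewrite hj; case: ifP.
Qed.

Lemma ph3D c1 j : c1 < h + g - f -> j <= h ->
  iter j s (i * h, c1) = (if i * h + j < (i + 1) * h then i * h + j else 0, (c1 + j) %% (h + g - f)).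
Proof.
move=> hc; elim: j => [|j IH] hj.
  have e1 := em; rewrite !addn0 (modn_small hc).
  by have -> : (i * h < (i + 1) * h) = true by lia.
rewrite iterS IH; last lia.
have e1 := em.
have -> : (i * h + j < (i + 1) * h) = true by lia.
rewrite /sD /=.
have -> : (i * h + j < i * h) = false by lia.
rewrite modS_if; last lia.
rewrite ifT; last by apply: ltn_pmod; lia.
by rewrite !addnS.
Qed.

Lemma retD c : c < h + g -> exists L, [/\ 0 < L, iter L s (0, c) = (0, RD i h g f c)
   & forall j, 0 < j < L -> (iter j s (0, c)).1 != 0].
Proof.
move=> hc.
have eN : iter (i * h) s (0, c) =
   (if (c + i * h) %% (h + g) < h + g - f then i * h else 0, (c + i * h) %% (h + g)).
  have e1 := em.
  have N0 : 0 < i * h by rewrite muln_gt0 i0 h0.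
  case E: (i * h) e1 N0 => [|N1] e1 N0; first by [].
  rewrite iterS ph1D //; last by rewrite E.
  rewrite /sD /= E ltnSn modS_if; last lia.
  rewrite -addnS.
  have -> : (N1.+1 < (i + 1) * h) = true by lia.
  by rewrite ltnn.
have N0 : 0 < i * h by rewrite muln_gt0 i0 h0.
rewrite /RD; case: ifP => hc1 in eN *.
  exists (h + i * h); split.
  - lia.
  - rewrite iterD eN ph3D //; first by rewrite em ifF //; lia.
  - move=> j /andP [j0 jL].
    case: (ltnP j (i * h)) => jN; first by rewrite ph1D //=; lia.
    have -> : j = (j - i * h) + i * h by lia.
    rewrite iterD eN ph3D //=; last lia.
    by case: ifP => //; lia.
exists (i * h); split => //.
move=> j /andP [j0 jL]; rewrite ph1D //=; lia.
Qed.
End DS.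

Definition sD' (i h g f : nat) (x : nat * nat) : nat * nat :=
  let c' := if x.1 < i * h - (g - f) then (if x.2.+1 < h + g then x.2.+1 else 0)
            else (if x.2.+1 < h + g then x.2.+1 else h) in
  (if c' < h then (if x.1.+1 < i * h - (g - f) then x.1.+1 else 0)
   else (if x.1.+1 < i * h then x.1.+1 else 0), c').

Lemma hpD' i h g f (x : 'I_(i * h) * 'I_(h + g)) :
  0 < i -> 0 < h -> 0 < g -> 0 < f -> f < g -> f <= h -> g - f < i * h ->
  D'_filled i h g f x -> pp (bishop (D'_filled i h g f) x) = sD' i h g f (pp x).
Proof.
move=> i0 h0 g0 f0 fg fh gfih Fx.
have [e1 e2] : (sR (D'_filled i h g f) x).1 = x.1 /\
   val (sR (D'_filled i h g f) x).2 = if x.1 < i * h - (g - f) then (if x.2.+1 < h + g then x.2.+1 else 0)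
            else (if x.2.+1 < h + g then x.2.+1 else h).
  case: (ltnP x.1 (i * h - (g - f))) => hr.
    apply: (@sR_int _ _ _ _ 0 (h + g)); first lia.
      by move=> c0; rewrite /D'_filled /=; case: c0 => c0 /= hc0; apply/idP/idP; lia.
    by case: x.2 => /=; lia.
  apply: (@sR_int _ _ _ _ h (h + g)); first lia.
    by move=> c0; rewrite /D'_filled /=; case: c0 => c0 /= hc0; apply/idP/idP; lia.
  move: Fx; rewrite /D'_filled; case: x.2 => /=; lia.
rewrite /bishop; set y := sR _ x in e1 e2 *.
have Fy : D'_filled i h g f y by apply: sR_in.
clearbody y.
case: (ltnP y.2 h) => hc.
  have [e3 e4] := @sC_int _ _ (D'_filled i h g f) y 0 (i * h - (g - f)) ltac:(lia)
    ltac:(by move=> c0; rewrite /D'_filled /=; case: c0 => c0 /= hc0; apply/idP/idP; lia)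
    ltac:(by move: Fy; rewrite /D'_filled; case: y.1 => /=; lia).
  by rewrite /pp e3 e4 /sD' /= -e2 hc e1.
have [e3 e4] := @sC_int _ _ (D'_filled i h g f) y 0 (i * h) ltac:(lia)
    ltac:(by move=> c0; rewrite /D'_filled /=; case: c0 => c0 /= hc0; apply/idP/idP; lia)
    ltac:(by case: y.1 => /=; lia).
rewrite /pp e3 e4 /sD' /= -e2 e1 (ltnNge y.2 h) hc /=; done.
Qed.

Definition RD' (i h g f c : nat) :=
  let c1 := (c + (i * h - (g - f))) %% (h + g) in
  if c1 < h then c1 else h + (c1 - h + (g - f)) %% g.

Section DS'.
Variables i h g f : nat.
Hypotheses (i0 : 0 < i) (h0 : 0 < h) (g0 : 0 < g) (f0 : 0 < f) (fg : f < g) (fh : f <= h)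
  (gfih : g - f < i * h).
Local Notation s := (sD' i h g f).
Local Notation N := (i * h - (g - f)).

Lemma reachD' z : exists k, (iter k s z).1 = 0.
Proof.
apply: (@reach_gen _ (i * h)) => {}z; rewrite /sD' /=.
by repeat case: ifP => ?; lia.
Qed.

Lemma ph1D' c j : c < h + g -> j < N -> iter j s (0, c) = (j, (c + j) %% (h + g)).
Proof.
move=> hc; elim: j => [|j IH] hj; first by rewrite addn0 modn_small.
rewrite iterS IH; last lia.
rewrite /sD' /=.
have -> : (j < N) = true by lia.
rewrite modS_if; last lia.
rewrite -addnS.
have -> : (j.+1 < i * h) = true by lia.
by rewrite hj; case: ifP.
Qed.

Lemma ph3D' c1 j : h <= c1 < h + g -> j <= g - f ->
  iter j s (N, c1) = (if N + j < i * h then N + j else 0, h + (c1 - h + j) %% g).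
Proof.
move=> hc; elim: j => [|j IH] hj.
  rewrite !addn0 modn_small; last lia.
  have -> : (N < i * h) = true by lia.
  by congr (_, _); lia.
rewrite iterS IH; last lia.
have -> : (N + j < i * h) = true by lia.
rewrite /sD' /=.
have -> : (N + j < N) = false by lia.
have -> : (if (h + (c1 - h + j) %% g).+1 < h + g then (h + (c1 - h + j) %% g).+1 else h)
   = h + (c1 - h + j).+1 %% g.
  rewrite -modS_if //.
  have := ltn_pmod (c1 - h + j) g0.
  by case: ifP => ?; case: ifP => ?; lia.
have -> : (h + (c1 - h + j).+1 %% g < h) = false by lia.
by rewrite !addnS.
Qed.

Lemma retD' c : c < h + g -> exists L, [/\ 0 < L, iter L s (0, c) = (0, RD' i h g f c)
   & forall j, 0 < j < L -> (iter j s (0, c)).1 != 0].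
Proof.
move=> hc.
have eN : iter N s (0, c) =
   (if (c + N) %% (h + g) < h then 0 else N, (c + N) %% (h + g)).
  have N0 : 0 < N by lia.
  have Nm : N < i * h by lia.
  case E: N N0 Nm => [|N1] N0 Nm; first by [].
  rewrite iterS ph1D' //; last by rewrite E.
  rewrite /sD' /= E ltnSn modS_if; last lia.
  rewrite -addnS ltnn.
  by have -> : (N1.+1 < i * h) = true by lia.
have hcn : (c + N) %% (h + g) < h + g by apply: ltn_pmod; lia.
rewrite /RD'; case: ifP => hc1 in eN *.
  exists N; split => //; first lia.
  move=> j /andP [j0 jL]; rewrite ph1D' //=; lia.
exists ((g - f) + N); split.
- lia.
- rewrite iterD eN ph3D' //; [ by rewrite ifF //; lia | lia].
- move=> j /andP [j0 jL].
  case: (ltnP j N) => jN; first by rewrite ph1D' //=; lia.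
  have -> : j = (j - N) + N by lia.
  rewrite iterD eN ph3D' //=; [ by case: ifP => //; lia | lia | lia].
Qed.
End DS'.

Lemma mod2 a n : a < n + n -> a %% n = if a < n then a else a - n.
Proof.
move=> ha; case: ifP => h; first by rewrite modn_small.
have -> : a = n + (a - n) by lia.
by rewrite modnDl modn_small; lia.
Qed.

Lemma RDeq i h g f c : 0 < i -> 0 < h -> 0 < g -> 0 < f -> f < g -> f <= h -> g - f < i * h ->
  c < h + g -> RD i h g f c = RD' i h g f c.
Proof.
move=> i0 h0 g0 f0 fg fh gfih hc.
rewrite /RD /RD'.
have hq := divn_eq (c + i * h) (h + g).
set x := (c + i * h) %% (h + g) in hq *.
set q := (c + i * h) %/ (h + g) in hq.
have hx : x < h + g by apply: ltn_pmod; lia.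
have ey : (c + (i * h - (g - f))) %% (h + g) = if g - f <= x then x - (g - f) else x + h + f.
  case: ifP => H.
    have -> : c + (i * h - (g - f)) = q * (h + g) + (x - (g - f)) by lia.
    by rewrite modnMDl modn_small; lia.
  case: q hq => [|q'] hq; first by rewrite mul0n in hq; lia.
  rewrite mulSn in hq.
  have -> : c + (i * h - (g - f)) = q' * (h + g) + (x + h + f) by lia.
  by rewrite modnMDl modn_small; lia.
rewrite ey.
case: (leqP (g - f) x) => H1.
  case: (ltnP x (h + g - f)) => H2.
    rewrite mod2; last lia.
    have -> : (x - (g - f) < h) = true by lia.
    by case: ifP => ?; lia.
  have -> : (x - (g - f) < h) = false by lia.
  rewrite mod2; last lia.
  by case: ifP => ?; lia.
have -> : (x < h + g - f) = true by lia.
rewrite mod2; last lia.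
have -> : (x + h + f < h) = false by lia.
rewrite mod2; last lia.
by case: ifP => ?; case: ifP => ?; lia.
Qed.

Lemma pp_inj m n : injective (@pp m n).
Proof.
by case=> a b [c d]; rewrite /pp /= => [[/val_inj -> /val_inj ->]].
Qed.

Lemma pp_surj m n c : 0 < m -> c < n -> exists y : 'I_m * 'I_n, pp y = (0, c).
Proof. by move=> m0 hc; exists (Ordinal m0, Ordinal hc). Qed.

Lemma RD_lt i h g f c : 0 < h -> f < g -> c < h + g -> RD i h g f c < h + g.
Proof.
move=> h0 fg hc; rewrite /RD; case: ifP => H.
  have : (((c + i * h) %% (h + g)) + h) %% (h + g - f) < h + g - f by apply: ltn_pmod; lia.
  lia.
by apply: ltn_pmod; lia.
Qed.

Unset Implicit Arguments.

Theorem lemma4p8 (i h g f : nat) :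
  0 < i -> 0 < h -> 0 < g -> 0 < f ->
  f < g -> f <= h -> g - f < i * h ->
  is_solution (D_filled i h g f) (bishop (D_filled i h g f)) <->
  is_solution (D'_filled i h g f) (bishop (D'_filled i h g f)).
Proof.
move=> i0 h0 g0 f0 fg fh gfih.
have ihp : 0 < i * h by rewrite muln_gt0 i0 h0.
rewrite (@abs_main _ (D_filled i h g f) (bishop (D_filled i h g f)) (@pp _ _) (sD i h g f)
   (h + g) (RD i h g f)).
- rewrite (@abs_main _ (D'_filled i h g f) (bishop (D'_filled i h g f)) (@pp _ _) (sD' i h g f)
   (h + g) (RD' i h g f)).
  + have E : forall j c, c < h + g -> iter j (RD i h g f) c = iter j (RD' i h g f) c.
      have bnd : forall j c, c < h + g -> iter j (RD i h g f) c < h + g.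
        by elim=> [|j IHj] c hc //=; apply: RD_lt => //; apply: IHj.
      elim=> [|j IH] c hc //=.
      by rewrite RDeq ?bnd // IH.
    split=> H c c' hc hc'; have [j hj] := H c c' hc hc'; exists j; by rewrite ?E // -?E.
  + by move=> x; apply: bishop_in.
  + by move=> x y; apply: bishop_inj.
  + by move=> x; apply: hpD'.
  + by case=> a b /= e; rewrite /D'_filled /= e; lia.
  + exact: pp_inj.
  + by move=> c; apply: pp_surj.
  + by move=> x; apply: ltn_ord.
  + exact: reachD'.
  + by move=> c; apply: retD'.
- by move=> x; apply: bishop_in.
- by move=> x y; apply: bishop_inj.
- by move=> x; apply: hpD.
- by case=> a b /= e; rewrite /D_filled /= e; lia.
- exact: pp_inj.
- by move=> c; apply: pp_surj; rewrite addn1 mulSn; lia.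
- by move=> x; apply: ltn_ord.
- exact: reachD.
- by move=> c; apply: retD.
Qed.
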